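(* Let $R$ be an Artinian multiplication ring. Then every multiplication $R$-module is an epimorphic image of the $R$-module $R$ (i.e., is cyclic).
   Context: All rings are commutative with $1$ and all modules are unital. A ring $R$ is a multiplication ring if whenever $I,J$ are ideals of $R$ with $J\subseteq I$, there is an ideal $I'$ of $R$ with $J=I'I$. An $R$-module $M$ is a multiplication module if every submodule of $M$ equals $IM$ for some ideal $I$ of $R$. *)

(* Defs.v *)
From HB Require Import structures.
From mathcomp Require Import all_boot all_order all_algebra.
Set Implicit Arguments. Unset Strict Implicit. Unset Printing Implicit Defensive.
Import GRing.Theory.
Local Open Scope ring_scope.

(* Subsets are represented as predicates [T -> Prop]; equality of subsets is
   extensional equality [same_set]. *)
Definition same_set (T : Type) (A B : T -> Prop) : Prop := forall x, A x <-> B x.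
Definition sub_set (T : Type) (A B : T -> Prop) : Prop := forall x, A x -> B x.

Definition is_ideal (R : comPzRingType) (I : R -> Prop) : Prop :=
  [/\ I 0, (forall x y, I x -> I y -> I (x + y)) & (forall r x, I x -> I (r * x))].

Definition ideal_mul (R : comPzRingType) (I J : R -> Prop) : R -> Prop :=
  fun x => exists n (a b : 'I_n -> R),
    (forall i, I (a i)) /\ (forall i, J (b i)) /\ x = \sum_(i < n) a i * b i.

Definition is_submodule (R : comPzRingType) (M : lmodType R) (N : M -> Prop) : Prop :=
  [/\ N 0, (forall x y, N x -> N y -> N (x + y)) & (forall r x, N x -> N (r *: x))].

Definition ideal_smul (R : comPzRingType) (M : lmodType R) (I : R -> Prop) : M -> Prop :=
  fun x => exists n (a : 'I_n -> R) (m : 'I_n -> M),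
    (forall i, I (a i)) /\ x = \sum_(i < n) a i *: m i.

Definition artinian_ring (R : comPzRingType) : Prop :=
  forall I : nat -> R -> Prop,
    (forall n, is_ideal (I n)) -> (forall n, sub_set (I n.+1) (I n)) ->
    exists N, forall n, (N <= n)%N -> same_set (I n) (I N).

Definition multiplication_ring (R : comPzRingType) : Prop :=
  forall I J : R -> Prop, is_ideal I -> is_ideal J -> sub_set J I ->
    exists I' : R -> Prop, is_ideal I' /\ same_set J (ideal_mul I' I).

Definition multiplication_module (R : comPzRingType) (M : lmodType R) : Prop :=
  forall N : M -> Prop, is_submodule N ->
    exists I : R -> Prop, is_ideal I /\ same_set N (@ideal_smul R M I).

(* Main.v *)
Require Import Defs.
From Stdlib Require Import Classical ClassicalEpsilon.
From HB Require Import structures.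
From mathcomp Require Import all_boot all_order all_algebra.
From mathcomp Require Import zify ring.
Import GRing.Theory.
Local Open Scope ring_scope.


Lemma dcc_min (R : comPzRingType) (F : (R -> Prop) -> Prop) :
  artinian_ring R -> (forall I, F I -> is_ideal I) -> (exists I, F I) ->
  exists I, F I /\ forall J, F J -> sub_set J I -> sub_set I J.
Proof.
move=> HA HF [I0 F0]; apply: NNPP => Hno.
have step : forall I, exists J, F I -> F J /\ sub_set J I /\ ~ sub_set I J.
  move=> I; case: (classic (F I)) => FI; last by exists I.
  have : ~ (forall J, F J -> sub_set J I -> sub_set I J).
    by move=> H; apply: Hno; exists I.
  move=> H0; apply not_all_ex_not in H0; case: H0 => J HJ; apply imply_to_and in HJ; case: HJ => FJ HJ; apply imply_to_and in HJ; case: HJ => sJ nI.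
  by exists J.
pose g I := proj1_sig (constructive_indefinite_description _ (step I)).
have gP I : F I -> F (g I) /\ sub_set (g I) I /\ ~ sub_set I (g I).
  exact: (proj2_sig (constructive_indefinite_description _ (step I))).
pose c n := iter n g I0.
have Fc n : F (c n) by elim: n => //= n IH; case: (gP _ IH).
have [N HN] := HA c (fun n => HF _ (Fc n)) (fun n => (gP _ (Fc n)).2.1).
apply: (gP _ (Fc N)).2.2 => x.
by have /(_ x) [_ ?] := HN N.+1 (leqnSn N).
Qed.

Lemma pow_kill (R : comPzRingType) (M : lmodType R) (x : R) p k :
  (p <= k)%N -> (forall m : M, x ^+ p *: m = 0) -> forall m : M, x ^+ k *: m = 0.
Proof. by move=> le H m; rewrite -(subnK le) exprD -scalerA H scaler0. Qed.
Arguments pow_kill {R M x p k}.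

Lemma nil_add (R : comPzRingType) (M : lmodType R) (x y : R) p q :
  (forall m : M, x ^+ p *: m = 0) -> (forall m : M, y ^+ q *: m = 0) ->
  forall m : M, (x + y) ^+ (p + q) *: m = 0.
Proof.
move=> Hx Hy m; rewrite exprDn scaler_suml big1 // => i _.
rewrite -scalerMnl.
suff -> : (x ^+ (p + q - i) * y ^+ i) *: m = 0 by rewrite mul0rn.
case: (leqP q i) => hi.
  by rewrite -scalerA (pow_kill hi Hy) scaler0.
have hp : (p <= p + q - i)%N.
  by move: hi; clear; lia.
by rewrite mulrC -scalerA (pow_kill hp Hx) scaler0.
Qed.

Lemma pireg (R : comPzRingType) (j : R) : artinian_ring R ->
  exists n b, (0 < n)%N /\ j ^+ n = j ^+ n.+1 * b.
Proof.
move=> HA.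
pose I k := fun z : R => exists r, z = j ^+ k.+1 * r.
have HI k : is_ideal (I k).
  split; first by exists 0; rewrite mulr0.
    by move=> x y [r ->] [s ->]; exists (r + s); rewrite mulrDr.
  by move=> r x [s ->]; exists (r * s); rewrite mulrCA.
have Hd k : sub_set (I k.+1) (I k).
  by move=> z [r ->]; exists (j * r); rewrite exprS mulrCA mulrA.
have [N HN] := HA I HI Hd.
have [_ /(_ (ex_intro _ 1 (esym (mulr1 _))))] := HN N.+1 (leqnSn N) (j ^+ N.+1).
by move=> [b Hb]; exists N.+1, b.
Qed.

Lemma idem_of (R : comPzRingType) (j b : R) n : j ^+ n = j ^+ n.+1 * b ->
  (j ^+ n * b ^+ n) * (j ^+ n * b ^+ n) = j ^+ n * b ^+ n /\
  j ^+ n * (j ^+ n * b ^+ n) = j ^+ n.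
Proof.
move=> H.
have H1 : j ^+ n = j * j ^+ n * b by rewrite {1}H exprS.
have Hk k : j ^+ n = j ^+ k * j ^+ n * b ^+ k.
  elim: k => [|k IH]; first by rewrite expr0 expr0 mul1r mulr1.
  rewrite {1}IH {1}H1 !exprS; ring.
have E : j ^+ n * (j ^+ n * b ^+ n) = j ^+ n by rewrite mulrA -Hk.
split=> //.
have -> : (j ^+ n * b ^+ n) * (j ^+ n * b ^+ n) = (j ^+ n * (j ^+ n * b ^+ n)) * b ^+ n by ring.
by rewrite E.
Qed.
Arguments dcc_min {R F}.
Arguments pireg {R}.
Arguments idem_of {R j b n}.


Lemma cyc_sub (R : comPzRingType) (M : lmodType R) (u : M) :
  is_submodule (fun z : M => exists r, z = r *: u).
Proof.
split; first by exists 0; rewrite scale0r.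
  by move=> x y [r ->] [s ->]; exists (r + s); rewrite scalerDl.
by move=> r x [s ->]; exists (r * s); rewrite scalerA.
Qed.

Arguments cyc_sub {R M}.

Lemma smul1 (R : comPzRingType) (M : lmodType R) (I : R -> Prop) a (m : M) :
  I a -> ideal_smul I (a *: m).
Proof.
move=> Ia; exists 1%N, (fun _ => a), (fun _ => m); split=> //.
by rewrite big_ord1.
Qed.

Lemma mult_cyc (R : comPzRingType) (M : lmodType R) (u : M) :
  multiplication_module M -> exists I, is_ideal I /\
   (forall z, (exists r, z = r *: u) <-> ideal_smul I z).
Proof. by move=> HM; have [I [HI HE]] := HM _ (cyc_sub u); exists I. Qed.
Arguments mult_cyc {R M}.

Lemma key (R : comPzRingType) (M : lmodType R) (e : R) :
  multiplication_module M -> e * e = e -> (exists m : M, (1 - e) *: m <> 0) ->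
  exists (m0 : M) j, (forall m : M, exists r, j *: m = r *: ((1 - e) *: m0)) /\
     (forall n, exists m : M, j ^+ n *: m <> 0).
Proof.
move=> HM ee [m1 Hm1]; apply: NNPP => H.
have H' : forall (m0 : M) j, (forall m : M, exists r, j *: m = r *: ((1 - e) *: m0)) ->
    exists n, forall m : M, j ^+ n *: m = 0.
  move=> m0 j Hj; apply: NNPP => Hn; apply: H; exists m0, j; split=> // n.
  apply: NNPP => Hm; apply: Hn; exists n => m; apply: NNPP => Hm2; apply: Hm.
  by exists m.
have oe : (1 - e) * (1 - e) = 1 - e.
  have -> : (1 - e) * (1 - e) = 1 - e + (e * e - e) by ring.
  by rewrite ee subrr addr0.
pose w := (1 - e) *: m1.
pose S s := exists n, forall m : M, s ^+ n *: m = 0.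
pose Q (z : M) := exists s, S s /\ z = s *: w.
have Q0 : Q 0 by exists 0; split; [exists 1%N => m; rewrite expr1 scale0r|rewrite scale0r].
have QD x y : Q x -> Q y -> Q (x + y).
  move=> [s [[p Hp] ->]] [t [[q Hq] ->]]; exists (s + t); split; last by rewrite scalerDl.
  by exists (p + q)%N; apply: nil_add.
have [I [HI HIE]] := mult_cyc w HM.
have [n [a [ms [Ha Hw]]]] : ideal_smul I w by apply/HIE; exists 1; rewrite scale1r.
have Qi i : Q (a i *: ((1 - e) *: ms i)).
  set u := (1 - e) *: ms i.
  have [J [HJ HJE]] := mult_cyc u HM.
  have [k [c [v [Hc Hu]]]] : ideal_smul J u by apply/HJE; exists 1; rewrite scale1r.
  rewrite Hu scaler_sumr; apply: big_ind => //.
  move=> l _; rewrite scalerA mulrC -scalerA.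
  have [r Hr] : exists r, a i *: v l = r *: w by apply/HIE; apply: smul1.
  rewrite Hr scalerA; exists (c l * r); split=> //.
  have [p Hp] : S (c l).
    apply: (H' (ms i)) => m; apply/HJE; exact: smul1.
  by exists p => m; rewrite exprMn mulrC -scalerA Hp scaler0.
have Qw : Q w.
  have -> : w = (1 - e) *: w by rewrite /w scalerA oe.
  rewrite Hw scaler_sumr; apply: big_ind => // i _.
  by rewrite scalerA mulrC -scalerA; apply: Qi.
case: Qw => s [[p Hp] Hs]; apply: Hm1; rewrite -/w.
have Hk k : w = s ^+ k *: w.
  elim: k => [|k IH]; first by rewrite scale1r.
  by rewrite exprSr -scalerA -Hs.
by rewrite (Hk p) Hp.
Qed.
Arguments key {R M e}.


Theorem corollary2p5 (R : comPzRingType) (M : lmodType R) :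
  artinian_ring R -> multiplication_ring R -> multiplication_module M ->
  exists f : R -> M,
    [/\ (forall x y, f (x + y) = f x + f y),
        (forall r x, f (r * x) = r *: f x) &
        (forall m : M, exists x, f x = m)].
Proof.
move=> HA _ HM.
pose P (e : R) := fun z : R => exists r, z = (1 - e) * r.
have PI e : is_ideal (P e).
  split; first by exists 0; rewrite mulr0.
    by move=> x y [r ->] [s ->]; exists (r + s); rewrite mulrDr.
  by move=> r x [s ->]; exists (r * s); rewrite mulrCA.
pose F I := exists e (x : M), e * e = e /\ (forall m : M, exists r, e *: m = r *: x)
   /\ same_set I (P e).
have HF I : F I -> is_ideal I.
  move=> [e [x [_ [_ HE]]]]; case: (PI e) => H0 HD HMu.
  split; first by apply/HE.
    by move=> a b /HE Ha /HE Hb; apply/HE; apply: HD.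
  by move=> r a /HE Ha; apply/HE; apply: HMu.
have F0 : exists I, F I.
  exists (P 0), 0, 0; split; first by rewrite mulr0.
  by split=> // m; exists 0; rewrite !scale0r.
have [I [[e [x [ee [Hx HIe]]]] Hmin]] := dcc_min HA HF F0.
case: (classic (forall m : M, (1 - e) *: m = 0)) => Hall.
  exists (fun r => r *: x); split.
  - by move=> a b; rewrite scalerDl.
  - by move=> r a; rewrite scalerA.
  - move=> m; have [r Hr] := Hx m; exists r; rewrite -Hr.
    by rewrite -{2}(scale1r m) -(subrK e 1) scalerDl Hall add0r.
exfalso.
have Hex : exists m : M, (1 - e) *: m <> 0.
  by apply: NNPP => H; apply: Hall => m; apply: NNPP => Hm; apply: H; exists m.
have [m0 [j [Hj Hn]]] := key HM ee Hex.
pose w := (1 - e) *: m0.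
have [n [b [n0 Hb]]] := pireg j HA.
have [ff Ejf] := idem_of Hb.
set f := j ^+ n * b ^+ n in ff Ejf.
have Hf m : exists s, f *: m = s *: w.
  have [s Hs] := Hj ((j ^+ n.-1 * b ^+ n) *: m); exists s; rewrite -Hs scalerA.
  by rewrite /f mulrA -exprS prednK.
have Hfn : exists m : M, f *: m <> 0.
  have [m Hm] := Hn n; exists m => Hf0; apply: Hm.
  by rewrite -Ejf -scalerA Hf0 scaler0.
pose g := f * (1 - e).
have eg : e * g = 0.
  have -> : e * g = f * (e - e * e) by rewrite /g; ring.
  by rewrite ee subrr mulr0.
have ge : g * e = 0 by rewrite mulrC.
have oe : (1 - e) * (1 - e) = 1 - e.
  have -> : (1 - e) * (1 - e) = 1 - e + (e * e - e) by ring.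
  by rewrite ee subrr addr0.
have gg' : g * g = g.
  rewrite /g; have -> : f * (1 - e) * (f * (1 - e)) = (f * f) * ((1 - e) * (1 - e)) by ring.
  by rewrite ff oe.
pose e' := e + g.
have ee' : e' * e' = e'.
  have -> : e' * e' = e * e + (e * g + g * e) + g * g by rewrite /e'; ring.
  by rewrite ee eg ge gg' addr0 addr0.
pose x' := e *: x + g *: w.
have Hx' m : exists r, e' *: m = r *: x'.
  have [r Hr] := Hx m; have [s Hs] := Hf ((1 - e) *: m).
  exists (e * r + g * s).
  rewrite /x' scalerDr !scalerA.
  have -> : (e * r + g * s) * e = (e * e) * r + (g * e) * s by ring.
  have -> : (e * r + g * s) * g = (e * g) * r + (g * g) * s by ring.
  rewrite ee ge eg gg' !mul0r addr0 add0r.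
  rewrite -!scalerA -Hr -Hs !scalerA ee /e' scalerDl; congr (_ + _).
  by congr (_ *: _); rewrite -{1}gg' /g /f; ring.
have Fe' : F (P e') by exists e', x'.
have sub : sub_set (P e') I.
  move=> z [r ->]; apply/HIe; exists ((1 - f) * r).
  by rewrite /e' /g; ring.
have [t Ht] : P e' (1 - e) by apply: (Hmin _ Fe' sub); apply/HIe; exists 1; rewrite mulr1.
have f1e : f * (1 - e) = 0.
  rewrite Ht.
  have -> : f * ((1 - e') * t) = (f - f * f) * (1 - e) * t by rewrite /e' /g; ring.
  by rewrite ff subrr !mul0r.
case: Hfn => m; apply.
have [s Hs] := Hf m.
rewrite -ff -scalerA Hs /w !scalerA.
have -> : f * (s * (1 - e)) = s * (f * (1 - e)) by ring.
by rewrite f1e mulr0 scale0r.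
Qed.
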